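(* Let $a,b\ge2$ and let $\alpha,\beta$ be integers with $\alpha<-b+1$ and $\beta>a-1$. Let $M_\sigma$ be the Poisson module over $\Lambda(a,b)$ with parameters $(\alpha,\beta)$ described in the context. Then $HP_0(\Lambda(a,b),M_\sigma)\cong\mathbb C$ and $HP_2(\Lambda(a,b),M_\sigma)=0$.
   Context: For integers $a,b\geq 2$, $\Lambda(a,b):=\mathbb C[X,Y]/(X^a,Y^b)$ with basis $X^iY^j$ ($0\le i\le a-1$, $0\le j\le b-1$) and Poisson bracket determined by $\{X,Y\}=XY$. For parameters $\alpha,\beta$, $M_\sigma$ is $\Lambda(a,b)$ as a $\Lambda(a,b)$-module, with external bracket $\{-,-\}_{M_\sigma}:M_\sigma\times\Lambda(a,b)\to M_\sigma$ given by $\{X^iY^j,X\}_{M_\sigma}=-(j+\alpha)X^{i+1}Y^j$, $\{X^iY^j,Y\}_{M_\sigma}=(i-\beta)X^iY^{j+1}$ (extended linearly in the first argument and by $\{m,fg\}_{M_\sigma}=\{m,f\}_{M_\sigma}g+\{m,g\}_{M_\sigma}f$ in the second). Kähler forms: $\Omega^0=\Lambda(a,b)$; $\Omega^1=(\Lambda(a,b)dX\oplus\Lambda(a,b)dY)/(X^{a-1}dX,\ Y^{b-1}dY)$, with basis $X^iY^jdX$ ($0\le i\le a-2$, $0\le j\le b-1$) and $X^iY^jdY$ ($0\le i\le a-1$, $0\le j\le b-2$); $\Omega^2$ has basis $X^iY^j\,dX\wedge dY$ ($0\le i\le a-2$, $0\le j\le b-2$); $\Omega^k=0$ for $k\ge3$.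 The Poisson homology $HP_*(\Lambda(a,b),M)$ with coefficients in a right Poisson module $M$ is the homology of the complex $M\otimes_{\Lambda(a,b)}\Omega^k$ with boundary $$\partial_k(m\otimes da_1\wedge\dots\wedge da_k)=\sum_{i}(-1)^{i+1}\{m,a_i\}_M\otimes da_1\wedge\cdots\widehat{da_i}\cdots\wedge da_k+\sum_{i<j}(-1)^{i+j}m\otimes d\{a_i,a_j\}\wedge da_1\wedge\cdots\widehat{da_i}\cdots\widehat{da_j}\cdots\wedge da_k;$$ concretely $\partial_1(m\otimes dX)=\{m,X\}_M$, $\partial_1(m\otimes dY)=\{m,Y\}_M$, $\partial_2(m\otimes dX\wedge dY)=\{m,X\}_M\otimes dY-\{m,Y\}_M\otimes dX-(mX\otimes dY+mY\otimes dX)$. *)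

(* Defs.v *)
From HB Require Import structures.
From mathcomp Require Import all_boot all_order all_algebra.
Set Implicit Arguments. Unset Strict Implicit. Unset Printing Implicit Defensive.
Import Order.TTheory GRing.Theory Num.Theory.
Local Open Scope ring_scope.

Section PoissonHomology.
Variables (F : fieldType) (a b : nat) (alpha beta : int).

(* Elements of Lambda(a,b) = F[X,Y]/(X^a,Y^b) are represented by their
   coefficient functions  c : nat -> nat -> F,  c i j = coefficient of X^i Y^j.
   Only the coefficients with i < a, j < b are ever read (see below),
   which realises the relations X^a = 0, Y^b = 0. *)
Definition lam := nat -> nat -> F.

Definition lam_add (m n : lam) : lam := fun i j => m i j + n i j.
Definition lam_opp (m : lam) : lam := fun i j => - m i j.
Definition lam_scale (c : F) (m : lam) : lam := fun i j => c * m i j.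

Definition mono (i j : nat) : lam := fun p q => ((p == i) && (q == j))%:R.

(* module multiplications  X^iY^j * X  and  X^iY^j * Y  in M_sigma = Lambda *)
Definition mulX_mono (i j : nat) : lam := mono i.+1 j.
Definition mulY_mono (i j : nat) : lam := mono i j.+1.

(* external bracket of M_sigma on monomials:
   {X^iY^j, X} = -(j+alpha) X^{i+1}Y^j,  {X^iY^j, Y} = (i-beta) X^iY^{j+1} *)
Definition brX_mono (i j : nat) : lam :=
  lam_scale (- ((j%:Z + alpha)%:~R)) (mono i.+1 j).
Definition brY_mono (i j : nat) : lam :=
  lam_scale ((i%:Z - beta)%:~R) (mono i j.+1).

(* bases of the chain spaces  M (x)_Lambda Omega^k  (M = Lambda) *)
Definition T0 := ('I_a * 'I_b)%type.
(* k = 1 : inl (i,j) = X^iY^j (x) dX  (i < a-1, j < b),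
           inr (i,j) = X^iY^j (x) dY  (i < a, j < b-1) *)
Definition T1 := (('I_a.-1 * 'I_b) + ('I_a * 'I_b.-1))%type.
(* k = 2 : X^iY^j (x) dX/\dY, i < a-1, j < b-1 *)
Definition T2 := ('I_a.-1 * 'I_b.-1)%type.

Definition coord0 (m : lam) (t : T0) : F := m t.1 t.2.
(* m (x) dX and m (x) dY in M (x) Omega^1 (the relations X^{a-1}dX = 0,
   Y^{b-1}dY = 0 are realised by not reading those coefficients) *)
Definition tdX (m : lam) (t : T1) : F :=
  match t with inl p => m p.1 p.2 | inr _ => 0 end.
Definition tdY (m : lam) (t : T1) : F :=
  match t with inl _ => 0 | inr p => m p.1 p.2 end.

(* boundary d_1 on basis elements:
   d_1(m (x) dX) = {m,X}_M,  d_1(m (x) dY) = {m,Y}_M *)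
Definition d1 (s : T1) : T0 -> F :=
  match s with
  | inl p => coord0 (brX_mono p.1 p.2)
  | inr p => coord0 (brY_mono p.1 p.2)
  end.

(* boundary d_2 on basis elements:
   d_2(m (x) dX/\dY) = {m,X}_M (x) dY - {m,Y}_M (x) dX - (mX (x) dY + mY (x) dX) *)
Definition d2 (s : T2) : T1 -> F :=
  fun t =>
    tdY (brX_mono s.1 s.2) t - tdX (brY_mono s.1 s.2) t
    - (tdY (mulX_mono s.1 s.2) t + tdX (mulY_mono s.1 s.2) t).

(* matrices of the boundaries, acting on row vectors of coordinates *)
Definition D1 : 'M[F]_(#|{: T1}|, #|{: T0}|) :=
  \matrix_(k, l) d1 (enum_val k) (enum_val l).
Definition D2 : 'M[F]_(#|{: T2}|, #|{: T1}|) :=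
  \matrix_(k, l) d2 (enum_val k) (enum_val l).

(* HP_0 = C_0 / im d_1 ; its dimension over F *)
Definition HP0_dim : nat := (#|{: T0}| - \rank D1)%N.
(* HP_2 = ker d_2 (there is no C_3) ; its dimension over F *)
Definition HP2_dim : nat := \rank (kermx D2).

End PoissonHomology.

(* Main.v *)
Require Import Defs.
From HB Require Import structures.
From mathcomp Require Import all_boot all_order all_algebra.
Import Order.TTheory GRing.Theory Num.Theory.
Local Open Scope ring_scope.

Lemma intf_neq0 (F : fieldType) (hF : [pchar F] =i pred0) (z : int) :
  z != 0 -> z%:~R != 0 :> F.
Proof.
move/pcharf0P: hF => h; case: z => [n|n] /=.
  by rewrite -pmulrn h.
by rewrite NegzE intrN oppr_eq0 -pmulrn h.
Qed.

Lemma ker_sub (F : fieldType) m n k (A : 'M[F]_(m,n)) (B : 'M[F]_(k,m)) :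
  (forall u : 'rV_m, u *m A = 0 -> (u <= B)%MS) -> (kermx A <= B)%MS.
Proof.
move=> H; apply/row_subP => i; apply: H.
by rewrite -row_mul mulmx_ker row0.
Qed.
Section S.
Variables (F : fieldType) (hF : [pchar F] =i pred0)
  (a b : nat) (ha : (2 <= a)%N) (hb : (2 <= b)%N) (alpha beta : int)
  (halpha : alpha < - (b%:Z) + 1) (hbeta : beta > a%:Z - 1).

Lemma D2_free (u : 'rV[F]_#|{: T2 a b}|) : u *m D2 F a b alpha beta = 0 -> u = 0.
Proof.
move=> Hu; apply/rowP => k; rewrite mxE.
case E: (enum_val k) => [i j].
have hi : (i.+1 < a)%N by move: (ltn_ord i); rewrite -ltnS prednK // (leq_trans _ ha).
pose l := enum_rank (inr (Ordinal hi, j) : T1 a b).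
move/matrixP/(_ 0 l): Hu.
rewrite !mxE (bigD1 k) //= big1.
  rewrite addr0 /D2 mxE enum_rankK E /d2 /tdY /tdX /brX_mono /mulX_mono /lam_scale /mono /= !eqxx /=.
  move/eqP; rewrite mulf_eq0 => /orP [/eqP //|].
  have hj : (j.+2 <= b)%N by move: (ltn_ord j); rewrite -ltnS prednK // (leq_trans _ hb).
  have h1 : alpha <= - b%:Z by rewrite -ltzD1.
  have h3 : j%:Z + alpha + 1 < 0.
    apply: (le_lt_trans (y := j%:Z - b%:Z + 1)); first by rewrite lerD2r lerD2l.
    by rewrite addrAC subr_lt0 -(PoszD j 1) ltz_nat addn1.
  have := @intf_neq0 F hF (- (j%:Z + alpha + 1)).
  rewrite oppr_eq0 ltr0_neq0 // => /(_ isT).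
  rewrite mulr1 subr0 addr0 => hne /eqP hz; exfalso; move/eqP: hne; apply; by rewrite intrN !intrD !opprD -opprD -intrD.
move=> k' nk; rewrite /D2 mxE enum_rankK; case E': (enum_val k') => [i' j'].
have hf : ((i.+1 == i'.+1) && (j == j' :> nat)) = false.
  apply/negbTE/negP => /andP [/eqP h1 /eqP h2]; apply/negP: nk; apply/negPn/eqP.
  apply: enum_val_inj; rewrite E E'; congr pair; apply: val_inj => //=; by case: h1.
rewrite /d2 /tdY /tdX /brX_mono /mulX_mono /lam_scale /mono /= hf.
by rewrite !mulr0 subrr sub0r addr0 oppr0 mulr0.
Qed.

Lemma coef_zero m n (A : 'M[F]_(m,n)) (u : 'rV_n) (s : 'I_m) (t : 'I_n) :
  u *m A^T = 0 -> A s t != 0 -> (forall t', t' != t -> A s t' = 0) -> u 0 t = 0.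
Proof.
move=> Hu hA hz; move/matrixP/(_ 0 s): Hu; rewrite !mxE (bigD1 t) //= big1.
  by rewrite addr0 mxE => /eqP; rewrite mulf_eq0 (negPf hA) orbF => /eqP.
by move=> t' /hz; rewrite mxE => ->; rewrite mulr0.
Qed.

Lemma D1T_ker (u : 'rV[F]_#|{: T0 a b}|) (h0a : (0 < a)%N) (h0b : (0 < b)%N) :
  u *m (D1 F a b alpha beta)^T = 0 ->
  u = u 0 (enum_rank ((Ordinal h0a, Ordinal h0b) : T0 a b)) *: delta_mx 0 (enum_rank ((Ordinal h0a, Ordinal h0b) : T0 a b)).
Proof.
set t00 := enum_rank _ => Hu; apply/rowP => t; rewrite !mxE.
case: (t =P t00) => [->|nt]; first by rewrite !eqxx mulr1.
rewrite andbF mulr0.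
case E: (enum_val t) => [p q].
have nz : forall t' : 'I_#|{: T0 a b}|, t' != t -> forall p' q', enum_val t' = (p', q') ->
    ((p' == p :> nat) && (q' == q :> nat)) = false.
  move=> t' nt' p' q' E'; apply/negbTE/negP => /andP [/eqP h1 /eqP h2].
  apply/negP: nt'; apply/negPn/eqP; apply: enum_val_inj; rewrite E E'; congr pair; exact: val_inj.
case: (posnP p) => [p0|pp].
  case: (posnP q) => [q0|qp].
    exfalso; apply: nt; apply: enum_val_inj; rewrite E /t00 enum_rankK; congr pair; exact: val_inj.
  have hq : (q.-1 < b.-1)%N by rewrite -ltnS prednK // (ltn_predK (ltn_ord q)).
  apply: (@coef_zero _ _ _ _ (enum_rank (inr (p, Ordinal hq) : T1 a b)) t Hu).
    rewrite mxE !enum_rankK E /= /d1 /Defs.coord0 /brY_mono /lam_scale /mono /= prednK // !eqxx mulr1.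
    apply: intf_neq0 => //; apply: ltr0_neq0; rewrite subr_lt0.
    apply: (le_lt_trans _ hbeta); rewrite lerBrDr -(PoszD p 1) lez_nat addn1; exact: ltn_ord.
  move=> t' nt'; rewrite mxE enum_rankK; case E': (enum_val t') => [p' q'] /=; rewrite /d1.
  by rewrite /Defs.coord0 /brY_mono /lam_scale /mono /= prednK // (nz t' nt' p' q' E') mulr0.
have hp : (p.-1 < a.-1)%N by rewrite -ltnS prednK // (ltn_predK (ltn_ord p)).
apply: (@coef_zero _ _ _ _ (enum_rank (inl (Ordinal hp, q) : T1 a b)) t Hu).
  rewrite mxE !enum_rankK E /= /d1 /Defs.coord0 /brX_mono /lam_scale /mono /= prednK // !eqxx mulr1.
  rewrite -intrN; apply: intf_neq0 => //; rewrite oppr_eq0; apply: ltr0_neq0.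
  have h1 : alpha <= - b%:Z by rewrite -ltzD1.
  apply: (le_lt_trans (y := q%:Z - b%:Z)); first by rewrite lerD2l.
  by rewrite subr_lt0 ltz_nat ltn_ord.
move=> t' nt'; rewrite mxE enum_rankK; case E': (enum_val t') => [p' q'] /=; rewrite /d1.
by rewrite /Defs.coord0 /brX_mono /lam_scale /mono /= prednK // (nz t' nt' p' q' E') mulr0.
Qed.
End S.


Theorem mainTheorem6 (F : fieldType) (hF : [pchar F] =i pred0)
  (a b : nat) (ha : (2 <= a)%N) (hb : (2 <= b)%N) (alpha beta : int)
  (halpha : alpha < - (b%:Z) + 1) (hbeta : beta > a%:Z - 1) :
  HP0_dim F a b alpha beta = 1%N /\ HP2_dim F a b alpha beta = 0%N.
Proof.
split.
  have h0a : (0 < a)%N by apply: leq_trans ha.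
  have h0b : (0 < b)%N by apply: leq_trans hb.
  set t00 := enum_rank ((Ordinal h0a, Ordinal h0b) : T0 a b).
  rewrite /HP0_dim -mxrank_tr -mxrank_ker; apply/eqP; rewrite eqn_leq; apply/andP; split.
    apply: leq_trans (rank_leq_row (delta_mx 0 t00 : 'rV[F]_#|{: T0 a b}|)).
    apply: mxrankS; apply: ker_sub => u Hu.
    rewrite (@D1T_ker F hF a b alpha beta halpha hbeta u h0a h0b Hu).
    by apply: scalemx_sub; apply: submx_refl.
  apply: leq_trans (mxrankS (_ : (delta_mx 0 t00 : 'rV[F]_#|{: T0 a b}|) <= _)%MS); first by rewrite mxrank_delta.
  rewrite sub_kermx -rowE.
  apply/eqP/rowP => s; rewrite !mxE enum_rankK.
  case: (enum_val s) => [[i j]|[i j]]; rewrite /= /d1 /Defs.coord0 /brX_mono /brY_mono /lam_scale /mono /=; rewrite ?mulr0 // [0%N == _.+1]eq_sym /= andbF ?mulr0 //.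
rewrite /HP2_dim.
have : (kermx (D2 F a b alpha beta) <= (0 : 'M_#|{: T2 a b}|))%MS.
  by apply: ker_sub => u Hu; rewrite (@D2_free F hF a b ha hb alpha beta halpha u Hu) sub0mx.
by rewrite submx0 -mxrank_eq0 => /eqP.
Qed.
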